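(* Let $\Phi:\mathbb{R}\to\mathbb{R}$, $\Phi(x)=W^{(2)}\mathrm{ReLU}\big(W^{(1)}\mathrm{ReLU}(W^{(0)}x+b^{(0)})+b^{(1)}\big)+b^{(2)}$, where $W^{(0)},W^{(1)}\sim\mathcal{N}(0,2)$, $W^{(2)}\sim\mathcal{N}(0,1)$, $b^{(\ell)}\sim\mathcal{D}^{(\ell)}$ for arbitrary probability distributions $\mathcal{D}^{(\ell)}$ on $\mathbb{R}$ ($\ell=0,1,2$), all jointly independent real random variables. Assume $\mathbb{P}(b^{(1)}\le 0)>0$. Let $\widetilde{\Phi}(x)=W^{(2)}(W^{(1)}(W^{(0)}x+b^{(0)})+b^{(1)})+b^{(2)}$. Then with positive probability $\mathrm{Lip}(\Phi)=0<\mathrm{Lip}(\widetilde{\Phi})$.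
   Context: $\mathrm{ReLU}(t)=\max\{0,t\}$; $\mathrm{Lip}(f)=\sup_{x\neq y}|f(x)-f(y)|/|x-y|$. This is a ReLU network of width $N=1$ with $L=2$ hidden layers, with the variance $2/N=2$ for the first two weight layers. *)

(* Defs.v *)
From HB Require Import structures.
From mathcomp Require Import all_boot all_order all_algebra.
From mathcomp Require Import all_classical all_reals all_analysis.
Set Implicit Arguments. Unset Strict Implicit. Unset Printing Implicit Defensive.
Import Order.TTheory GRing.Theory Num.Theory.
Local Open Scope classical_set_scope.
Local Open Scope ring_scope.

Definition ReLU {R : realType} (t : R) : R := Num.max 0 t.

Definition Lip {R : realType} (f : R -> R) : \bar R :=
  ereal_sup [set e : \bar R | exists x y : R, x != y /\
                e = (`|f x - f y| / `|x - y|)%:E].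

Definition Phi {R : realType} (W0 W1 W2 b0 b1 b2 : R) (x : R) : R :=
  W2 * ReLU (W1 * ReLU (W0 * x + b0) + b1) + b2.

Definition Phi_lin {R : realType} (W0 W1 W2 b0 b1 b2 : R) (x : R) : R :=
  W2 * (W1 * (W0 * x + b0) + b1) + b2.

(* (mutual) independence of six real random variables: the product rule
   for every choice of measurable sets (taking A_i = setT recovers every
   subfamily). *)
Definition independent6 {d} {T : measurableType d} {R : realType}
  (P : probability T R) (X0 X1 X2 X3 X4 X5 : T -> R) : Prop :=
  forall A0 A1 A2 A3 A4 A5 : set R,
    measurable A0 -> measurable A1 -> measurable A2 ->
    measurable A3 -> measurable A4 -> measurable A5 ->
    P (X0 @^-1` A0 `&` X1 @^-1` A1 `&` X2 @^-1` A2 `&`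
       X3 @^-1` A3 `&` X4 @^-1` A4 `&` X5 @^-1` A5) =
    (P (X0 @^-1` A0) * P (X1 @^-1` A1) * P (X2 @^-1` A2) *
     P (X3 @^-1` A3) * P (X4 @^-1` A4) * P (X5 @^-1` A5))%E.

Definition has_law {d} {T : measurableType d} {R : realType}
  (P : probability T R) (X : T -> R) (mu : set R -> \bar R) : Prop :=
  forall A : set R, measurable A -> P (X @^-1` A) = mu A.

(* Main.v *)
Require Import Defs.
From HB Require Import structures.
From mathcomp Require Import all_boot all_order all_algebra.
From mathcomp Require Import all_classical all_reals all_analysis.
From mathcomp Require Import measurable_realfun normal_distribution lra ring.
Import Order.TTheory GRing.Theory Num.Theory.
Local Open Scope classical_set_scope.
Local Open Scope ring_scope.

Lemma normal_neg_pos (R : realType) (s : R) : s != 0 ->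
  (0 < normal_prob 0 s `[(-1)%R, 0%R[%classic)%E.
Proof.
move=> s0.
set c := normal_peak s * expR (- 1 / (s ^+ 2 *+ 2)).
have c0 : 0 < c by rewrite mulr_gt0 ?normal_peak_gt0 ?expR_gt0.
apply: (@lt_le_trans _ _ (\int[lebesgue_measure]_(x in `[(-1)%R, 0%R[%classic) (cst c%:E) x)%E).
  rewrite integral_cst// [X in (_ * X)%E]lebesgue_measure_itv/= lte_fin ltrN10 add0e opprK.
  by rewrite mule_gt0 ?lte_fin.
apply: ge0_le_integral => //.
- by move=> x _; rewrite lee_fin ltW.
- by apply/measurable_EFinP; apply: measurable_funS (measurable_normal_pdf 0 s) => //.
- move=> x; rewrite /= in_itv /= => /andP[x1 x0].
  rewrite lee_fin /normal_pdf (negbTE s0) /c /normal_fun subr0.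
  rewrite ler_pM2l ?normal_peak_gt0 // ler_expR.
  rewrite !mulNr lerN2 ler_pM2r; last by rewrite invr_gt0 mulrn_wgt0 // exprn_even_gt0.
  rewrite expr2; nra.
Qed.


Lemma Lip_const (R : realType) (f : R -> R) (c : R) : (forall x, f x = c) -> Lip f = 0%E.
Proof.
move=> fc; rewrite /Lip.
rewrite (_ : [set e | _] = [set 0%E]); first exact: ereal_sup1.
apply/seteqP; split => e /=.
  by move=> [x [y [_ ->]]]; rewrite !fc subrr normr0 mul0r.
move=> ->; exists 0, 1; split; first by rewrite eq_sym oner_eq0.
by rewrite !fc subrr normr0 mul0r.
Qed.

Lemma Lip_pos (R : realType) (f : R -> R) : f 0 != f 1 -> (0 < Lip f)%E.
Proof.
move=> h; apply: (@lt_le_trans _ _ (`|f 0 - f 1| / `|0 - 1|)%:E).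
  by rewrite lte_fin sub0r normrN normr1 divr1 normr_gt0 subr_eq0.
apply: ereal_sup_ubound; exists 0, 1; split => //.
by rewrite eq_sym oner_eq0.
Qed.

Theorem proposition4p9 (R : realType) (d : measure_display) (T : measurableType d)
  (P : probability T R)
  (W0 W1 W2 b0 b1 b2 : {RV P >-> R})
  (D0 D1 D2 : probability R R) :
  has_law P W0 (normal_prob 0 (Num.sqrt 2)) ->
  has_law P W1 (normal_prob 0 (Num.sqrt 2)) ->
  has_law P W2 (normal_prob 0 1) ->
  has_law P b0 D0 -> has_law P b1 D1 -> has_law P b2 D2 ->
  independent6 P W0 W1 W2 b0 b1 b2 ->
  (0 < P [set w | (b1 w <= 0)%R])%E ->
  exists E : set T, [/\ measurable E, (0 < P E)%E &
    forall w, E w ->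
      Lip (Phi (W0 w) (W1 w) (W2 w) (b0 w) (b1 w) (b2 w)) = 0%E /\
      (0 < Lip (Phi_lin (W0 w) (W1 w) (W2 w) (b0 w) (b1 w) (b2 w)))%E].
Proof.
move=> L0 L1 L2 _ _ _ ind pb1.
pose A := (`[(-1)%R, 0%R[%classic : set R).
have mA : measurable A by exact: measurable_itv.
have mN : measurable (`]-oo, 0%R]%classic : set R) by exact: measurable_itv.
pose E := W0 @^-1` A `&` W1 @^-1` A `&` W2 @^-1` A `&`
       b0 @^-1` setT `&` b1 @^-1` `]-oo, 0%R]%classic `&` b2 @^-1` setT.
have s20 : Num.sqrt (2:R) != 0 by rewrite gt_eqF // sqrtr_gt0 ltr0n.
exists E; split.
- by apply: measurableI; [repeat apply: measurableI|]; apply: measurable_funPTI.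
- rewrite /E ind //.
  rewrite !preimage_setT probability_setT !mule1.
  have -> : b1 @^-1` `]-oo, 0%R]%classic = [set w | (b1 w <= 0)%R].
    by apply/seteqP; split => w /=; rewrite in_itv.
  rewrite L0 // L1 // L2 //.
  by rewrite !mule_gt0 // normal_neg_pos // oner_neq0.
- move=> w; rewrite /E /A /= !in_itv /= => -[[[[[/andP[_ h0] /andP[_ h1]] /andP[_ h2]] _] hb] _].
  split.
    apply: (@Lip_const _ _ (b2 w)) => x.
    rewrite /Phi /ReLU.
    have -> : Num.max 0 (W1 w * Num.max 0 (W0 w * x + b0 w) + b1 w) = 0.
      apply/max_idPl.
      have : W1 w * Num.max 0 (W0 w * x + b0 w) <= 0.
        have hM : 0 <= Num.max 0 (W0 w * x + b0 w) by rewrite le_max lexx.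
        nra.
      move=> h; lra.
    by rewrite mulr0 add0r.
  apply: Lip_pos; apply/eqP => H.
  have e : Phi_lin (W0 w) (W1 w) (W2 w) (b0 w) (b1 w) (b2 w) 1 -
           Phi_lin (W0 w) (W1 w) (W2 w) (b0 w) (b1 w) (b2 w) 0 =
           W2 w * W1 w * W0 w by rewrite /Phi_lin; ring.
  move: e; rewrite H subrr => /esym/eqP.
  apply/negP; rewrite !mulf_neq0 // lt_eqF //.
Qed.
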